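(* Consider the network model with interest-based mobility described in the context, where the angle $\alpha=\angle(S,D)$ is uniformly distributed on $[0,\pi/2]$, and the routing FM$^0$ in which $S$ can only deliver the message directly to $D$ (at the first meeting of $S$ and $D$). Let $T_{FM^0}$ be the delivery time, so that $\mathbb{E}[T_{FM^0}]=\int_0^{\pi/2}\frac{2}{\pi}\cdot\frac{1}{k\cos\alpha+\delta}\,d\alpha$. Then $\mathbb{E}[T_{FM^0}]=\Omega(\log(1/\delta))$, i.e. there is a constant $c>0$ with $\mathbb{E}[T_{FM^0}]\ge c\log(1/\delta(n))$ for all sufficiently large $n$.
   Context: Interest profiles of $S$ and $D$ are unit vectors in the closed positive orthant of the unit sphere of $\mathbb{R}^m$; $S=(1,0,\dots,0)$ and the angle $\angle(S,D)$ is uniform on $[0,\pi/2]$. Conditional on the profiles, the meeting instants of $S$ and $D$ form a Poisson process of rate $\lambda_{SD}=k\cos\angle(S,D)+\delta$ (interest-based mobility), where $\lambda>0$ is a fixed constant, $\delta=\delta(n)>0$ with $\delta(n)\to0$, and $k=\frac{\pi}{2}(\lambda-\delta)$. *)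

(* Defs.v *)
From Stdlib Require Import Reals.
From Coquelicot Require Import Coquelicot.
Open Scope R_scope.

Definition kcoef (lam delta : R) : R := PI / 2 * (lam - delta).

Definition meet_rate (lam delta a : R) : R := kcoef lam delta * cos a + delta.

(* Expected delivery time of FM^0: the first meeting time of S and D is,
   conditionally on the angle a, exponential with rate meet_rate, hence has
   mean 1 / meet_rate; the angle a is uniform on [0, pi/2] (density 2/pi). *)
Definition E_T_FM0 (lam delta : R) : R :=
  RInt (fun a => 2 / PI * / meet_rate lam delta a) 0 (PI / 2).

(* Main.v *)
Require Import Defs.
From Stdlib Require Import Reals Lra.
From Coquelicot Require Import Coquelicot.
Open Scope R_scope.

Lemma cos_le_shift a : 0 <= a <= PI/2 -> cos a <= PI/2 - a.
Proof.
  intros [H1 H2]. rewrite <- sin_shift.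
  destruct (Req_dec (PI/2 - a) 0) as [E|E].
  - rewrite E, sin_0; lra.
  - left; apply sin_lt_x; lra.
Qed.

Lemma int_bound (k d : R) : 0 < k -> 0 < d ->
  2 / (PI * k) * (ln (k * (PI/2) + d) - ln d) <=
  RInt (fun a => 2 / PI * / (k * cos a + d)) 0 (PI / 2).
Proof.
  intros Hk Hd. pose proof PI_RGT_0 as Hpi.
  set (g := fun a => 2 / PI * / (k * (PI/2 - a) + d)).
  set (F := fun a => - (2 / (PI * k)) * ln (k * (PI/2 - a) + d)).
  assert (HD : forall x, x <= PI/2 -> is_derive F x (g x)).
  { intros x Hx. unfold F, g.
    assert (0 < k * (PI/2 - x) + d) by nra.
    auto_derive; [lra|]. field. split; lra. }
  assert (HR : is_RInt g 0 (PI/2) (F (PI/2) - F 0)).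
  { apply (is_RInt_derive F g).
    - intros x Hx. apply HD. rewrite Rmax_right in Hx; lra.
    - intros x Hx. rewrite Rmax_right in Hx by lra.
      apply (@ex_derive_continuous R_AbsRing R_NormedModule). unfold g.
      assert (0 < k * (PI/2 - x) + d) by nra.
      auto_derive. lra. }
  assert (HV : F (PI/2) - F 0 = 2 / (PI * k) * (ln (k * (PI/2) + d) - ln d)).
  { unfold F. replace (k * (PI/2 - PI/2) + d) with d by ring.
    replace (k * (PI/2 - 0) + d) with (k * (PI/2) + d) by ring. ring. }
  rewrite <- HV, <- (is_RInt_unique _ _ _ _ HR).
  apply RInt_le.
  - lra.
  - eexists; exact HR.
  - apply (@ex_RInt_continuous R_CompleteNormedModule). intros z Hz.
    rewrite Rmin_left in Hz by lra. rewrite Rmax_right in Hz by lra.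
    apply (@ex_derive_continuous R_AbsRing R_NormedModule).
    assert (0 <= cos z) by (apply cos_ge_0; lra).
    assert (0 < k * cos z + d) by nra.
    auto_derive. lra.
  - intros x Hx. unfold g.
    assert (0 <= cos x) by (apply cos_ge_0; lra).
    pose proof (cos_le_shift x ltac:(lra)).
    apply Rmult_le_compat_l.
    + apply Rlt_le, Rdiv_lt_0_compat; lra.
    + apply Rinv_le_contravar; nra.
Qed.

Theorem lemma8 (lam : R) (delta : nat -> R) :
  0 < lam ->
  (forall n, 0 < delta n) ->
  is_lim_seq delta 0 ->
  exists c : R, 0 < c /\
    exists N : nat, forall n : nat, (N <= n)%nat ->
      c * ln (1 / delta n) <= E_T_FM0 lam (delta n).
Proof.
  intros Hl Hd Hlim. pose proof PI_RGT_0 as Hpi.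
  set (A := PI * PI * lam / 8).
  assert (HPP : 0 < PI*PI) by (apply Rmult_lt_0_compat; lra).
  assert (HA : 0 < A) by (unfold A; apply Rdiv_lt_0_compat; [apply Rmult_lt_0_compat; lra | lra]).
  set (eps := Rmin (lam/2) (Rmin A (A*A))).
  assert (Heps : 0 < eps).
  { unfold eps. apply Rmin_pos; [lra|]. apply Rmin_pos; [lra|]. apply Rmult_lt_0_compat; lra. }
  apply is_lim_seq_spec in Hlim.
  destruct (Hlim (mkposreal eps Heps)) as [N HN].
  exists (2 / (PI * PI * lam)). split.
  { apply Rdiv_lt_0_compat; nra. }
  exists N. intros n Hn. specialize (HN n Hn). simpl in HN.
  set (d := delta n) in *. pose proof (Hd n) as Hd0. fold d in Hd0.
  rewrite Rminus_0_r, Rabs_pos_eq in HN by lra.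
  unfold eps in HN.
  assert (H1 : d <= lam/2) by (pose proof (Rmin_l (lam/2) (Rmin A (A*A))); lra).
  assert (H2 : d <= A) by (pose proof (Rmin_r (lam/2) (Rmin A (A*A))); pose proof (Rmin_l A (A*A)); lra).
  assert (H3 : d <= A*A) by (pose proof (Rmin_r (lam/2) (Rmin A (A*A))); pose proof (Rmin_r A (A*A)); lra).
  set (k := kcoef lam d).
  assert (Hk1 : PI * lam / 4 <= k) by (unfold k, kcoef; nra).
  assert (Hk2 : k <= PI * lam / 2) by (unfold k, kcoef; nra).
  assert (Hk : 0 < k) by nra.
  pose proof (int_bound k d Hk Hd0) as HI.
  unfold E_T_FM0, meet_rate. fold k.
  eapply Rle_trans; [|exact HI].
  assert (HlnA : ln A <= ln (k * (PI/2) + d)) by (apply ln_le; [lra| unfold A; nra]).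
  assert (HlnAd : ln d <= ln A) by (apply ln_le; lra).
  assert (HlnAA : ln d <= 2 * ln A).
  { replace (2 * ln A) with (ln (A*A)) by (rewrite ln_mult; lra). apply ln_le; lra. }
  assert (Hl1 : ln (1 / d) = - ln d).
  { rewrite ln_div by lra. rewrite ln_1. ring. }
  rewrite Hl1.
  set (X := ln A - ln d).
  assert (HX : 0 <= X) by (unfold X; lra).
  assert (Hc : 2 / (PI * PI * lam) * (- ln d) <= 2 / (PI * (PI * lam / 2)) * X).
  { replace (2 / (PI * (PI * lam / 2))) with (2 * (2 / (PI * PI * lam))) by (field; lra).
    assert (0 < 2 / (PI * PI * lam)) by (apply Rdiv_lt_0_compat; nra).
    unfold X. nra. }
  eapply Rle_trans; [exact Hc|].
  apply Rle_trans with (2 / (PI * k) * X).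
  { apply Rmult_le_compat_r; [lra|].
    unfold Rdiv. apply Rmult_le_compat_l; [lra|].
    apply Rinv_le_contravar; nra. }
  apply Rmult_le_compat_l.
  { apply Rlt_le, Rdiv_lt_0_compat; nra. }
  unfold X; lra.
Qed.
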